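(* Let $\delta\in(0,1)$ and an even integer $n_{\mathrm{in}}\ge2$ be given, let $b_1,b_2,\dots>0$, $b_{\max,i}:=\max_{j\le i}b_j$, and $a_i:=b_ib_{\max,i}(\frac12+\log(2n_{\mathrm{in}}/\delta))$. Define $\sigma_0^2:=0$ and, for $i\ge1$, $$\sigma_i^2:=\sigma_{i-1}^2+b_i^2\Big(1+\frac{\sigma_{i-1}^2}{a_i^2}(b_i^2-2a_i)\Big)_+ .$$ Then for each $i\ge1$, $$\sigma_i^2\le c_i:=\max_{j\in[i]}\max(b_j^2,r_j),\qquad\text{where } r_i:=\frac{a_i^2}{2a_i-b_i^2}\le\frac{a_i^2}{2a_i-b_ib_{\max,i}}.$$
   Context: $(x)_+=\max(x,0)$. (In the paper $b_i=\|\mathbf{k}(x_{2i-1},\cdot)-\mathbf{k}(x_{2i},\cdot)\|_{\mathbf{k}}$ and $a_i$ are the quantities of the Kernel Halving algorithm, and $\sigma_i$ are the sub-Gaussian constants of the associated self-balancing Hilbert walk.) *)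

(* Defs.v *)
From mathcomp Require Import all_boot all_order all_algebra.
From mathcomp Require Import all_classical all_reals all_analysis.
Set Implicit Arguments. Unset Strict Implicit. Unset Printing Implicit Defensive.
Import Order.TTheory GRing.Theory Num.Theory.
Local Open Scope ring_scope.

Section KH.
Variables (R : realType) (delta : R) (nin : nat) (b : nat -> R).

(* sequences are indexed from 1; the value b 0 is never used *)
Definition bmax (i : nat) : R := \big[Num.max/0]_(1 <= j < i.+1) b j.

Definition aKH (i : nat) : R :=
  b i * bmax i * (2^-1 + ln (2 * nin%:R / delta)).

Fixpoint sigma2 (i : nat) : R :=
  match i with
  | 0 => 0
  | k.+1 => sigma2 k + b k.+1 ^+ 2 *
      Num.max 0 (1 + sigma2 k / aKH k.+1 ^+ 2 * (b k.+1 ^+ 2 - 2 * aKH k.+1))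
  end.

Definition rKH (i : nat) : R := aKH i ^+ 2 / (2 * aKH i - b i ^+ 2).

Definition cKH (i : nat) : R :=
  \big[Num.max/0]_(1 <= j < i.+1) Num.max (b j ^+ 2) (rKH j).

End KH.

(* Main.v *)
Require Import Defs.
From mathcomp Require Import all_boot all_order all_algebra.
From mathcomp Require Import all_classical all_reals all_analysis.
From mathcomp Require Import lra.
Import Order.TTheory GRing.Theory Num.Theory.
Local Open Scope ring_scope.

Lemma step (R : realType) (s b2 a c : R) : 0 <= s -> s <= c -> 0 < b2 -> b2 < 2 * a ->
  a ^+ 2 / (2 * a - b2) <= c ->
  s + b2 * Num.max 0 (1 + s / a ^+ 2 * (b2 - 2 * a)) <= c.
Proof.
move=> s0 sc b0 ba rc.
have d0 : 0 < 2 * a - b2 by lra.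
have a0 : 0 < a by lra.
have a20 : 0 < a ^+ 2 by rewrite exprn_gt0.
set t := s / a ^+ 2.
have st : s = t * a ^+ 2 by rewrite /t mulfVK // gt_eqF.
have t0 : 0 <= t by rewrite /t divr_ge0 // ltW.
have key : b2 * (2 * a - b2) <= a ^+ 2 by have := sqr_ge0 (a - b2); nra.
case: (lerP (1 + t * (b2 - 2 * a)) 0) => h.
  by rewrite mulr0 addr0.
apply: le_trans rc.
rewrite ler_pdivlMr // st.
nra.
Qed.

Section BM.
Variable R : realType.
Implicit Types (s : seq nat) (F : nat -> R).

Lemma bm_ge0 s F : 0 <= \big[Num.max/0]_(j <- s) F j.
Proof.
elim: s => [|x s IH]; first by rewrite big_nil.
by rewrite big_cons le_max IH orbT.
Qed.

Lemma bm_le s F x : x \in s -> F x <= \big[Num.max/0]_(j <- s) F j.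
Proof.
elim: s => [|y s IH] //; rewrite in_cons big_cons le_max => /orP [/eqP ->|xs].
  by rewrite lexx.
by rewrite IH ?orbT.
Qed.

Lemma bm_ub s F M : (forall x, x \in s -> F x <= M) -> 0 <= M ->
  \big[Num.max/0]_(j <- s) F j <= M.
Proof.
elim: s => [|y s IH] H M0; first by rewrite big_nil.
rewrite big_cons ge_max H ?mem_head //= IH // => x xs.
by apply: H; rewrite in_cons xs orbT.
Qed.
End BM.

Theorem lemmaB1 (R : realType) (delta : R) (nin : nat) (b : nat -> R) :
  0 < delta < 1 ->
  (2 <= nin)%N -> ~~ odd nin ->
  (forall i, (1 <= i)%N -> 0 < b i) ->
  forall i, (1 <= i)%N ->
    sigma2 delta nin b i <= cKH delta nin b i /\
    rKH delta nin b i <=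
      aKH delta nin b i ^+ 2 / (2 * aKH delta nin b i - b i * bmax b i).
Proof.
move=> /andP [d0 d1] n2 _ bpos.
set L := 2^-1 + ln (2 * nin%:R / delta).
have L0 : 2^-1 < L.
  rewrite /L ltrDl ln_gt0 // ltr_pdivlMr // mul1r.
  have : (2%:R <= nin%:R :> R) by rewrite ler_nat.
  lra.
have bmb : forall i, (1 <= i)%N -> b i <= bmax b i.
  move=> i i1; rewrite /bmax; apply: bm_le.
  by rewrite mem_index_iota i1 ltnSn.
have aE : forall i, aKH delta nin b i = b i * bmax b i * L by [].
have ba2' : forall i, (1 <= i)%N -> b i * bmax b i < 2 * aKH delta nin b i.
  move=> i i1; rewrite aE; have := bmb i i1; have := bpos i i1.
  move=> h1 h2.
  have p : 0 < b i * bmax b i by apply: mulr_gt0 => //; lra.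
  have : 0 < b i * bmax b i * (2 * L - 1) by apply: mulr_gt0 => //; lra.
  lra.
have ba : forall i, (1 <= i)%N -> b i ^+ 2 < 2 * aKH delta nin b i.
  move=> i i1; apply: le_lt_trans (ba2' i i1).
  rewrite expr2 ler_wpM2l //; [exact: ltW (bpos i i1)|exact: bmb].
have ba2 := ba2'.
have rc : forall i, (1 <= i)%N -> rKH delta nin b i <= cKH delta nin b i.
  move=> i i1; rewrite /cKH.
  have mi : i \in index_iota 1 i.+1 by rewrite mem_index_iota i1 ltnSn.
  apply: (le_trans _ (@bm_le R _ (fun j => Num.max (b j ^+ 2) (rKH delta nin b j)) i mi)).
  by rewrite le_max lexx orbT.
have cmono : forall i, cKH delta nin b i <= cKH delta nin b i.+1.
  move=> i; rewrite /cKH; apply: bm_ub; last exact: bm_ge0.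
  move=> x; rewrite mem_index_iota => /andP [x1 xi].
  apply: bm_le; rewrite mem_index_iota x1 /=; exact: ltnW.
have main : forall i, 0 <= sigma2 delta nin b i /\ sigma2 delta nin b i <= cKH delta nin b i.
  elim=> [|i [IH0 IH1]] /=.
    by rewrite /cKH big_geq.
  split.
    apply: addr_ge0 => //; apply: mulr_ge0; first exact: sqr_ge0.
    by rewrite le_max lexx.
  apply: step => //.
  - exact: le_trans IH1 (cmono i).
  - by rewrite exprn_gt0 // bpos.
  - exact: ba.
  - exact: rc.
move=> i i1; split; first by case: (main i).
rewrite /rKH; apply: ler_wpM2l; first exact: sqr_ge0.
have h1 := ba i i1; have h2 := ba2 i i1.
rewrite lef_pV2 ?posrE ?subr_gt0 //.
rewrite lerD2l lerN2 expr2 ler_wpM2l //; last exact: bmb.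
exact: ltW (bpos i i1).
Qed.
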